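(* Let $G$ be an infinite discrete countable group, $(X,\mu,G)$ a $G$-measure preserving system and $B\in\mathcal{B}_X^\mu$. If $\{U_g1_B:g\in G\}$ is precompact in $L^2(\mu)$, then $h^*_\mu(G,\{B,B^c\})=0$.
   Context: $(X,\mu,G)$: compact metric space with $G$ acting by homeomorphisms and $G$-invariant Borel probability $\mu$; $\mathcal{B}_X^\mu$ is the $\mu$-completed Borel $\sigma$-algebra; $U_gf(x)=f(gx)$. For a finite partition $\alpha$ into sets of $\mathcal{B}_X^\mu$ and a sequence $\mathcal{A}=(g_n)$ in $G$, $h^{\mathcal{A}}_\mu(G,\alpha)=\limsup_n\frac1nH_\mu(\bigvee_{i=1}^ng_i^{-1}\alpha)$ with $H_\mu(\beta)=-\sum_{C\in\beta}\mu(C)\log\mu(C)$, and $h^*_\mu(G,\alpha)=\sup_{\mathcal{A}}h^{\mathcal{A}}_\mu(G,\alpha)$ over all sequences in $G$. *)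

(* Defs.v *)
From HB Require Import structures.
From mathcomp Require Import all_boot all_order all_algebra.
From mathcomp Require Import monoid.
From mathcomp Require Import all_classical all_reals all_analysis.
From mathcomp Require Import measurable_realfun hoelder.

Set Implicit Arguments.
Unset Strict Implicit.
Unset Printing Implicit Defensive.

Import Order.TTheory GRing.Theory Num.Theory.
Import numFieldNormedType.Exports.

Local Open Scope classical_set_scope.
Local Open Scope ring_scope.

Definition borel (X : ptopologicalType) := g_sigma_algebraType (@open X).

(* The mu-completion B_X^mu of the sigma-algebra of mu:
   sets of the form A \cup N with A measurable and N mu-negligible. *)
Definition completion_sets d (T : measurableType d) (R : realType)
  (mu : {measure set T -> \bar R}) : set (set T) := completed_algebra_gen mu.

(* The completed measure space (carrier T, completed measure mu^* ). *)
Definition completed_space d (T : measurableType d) (R : realType)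
  (mu : {measure set T -> \bar R}) := caratheodory_type (mu^*)%mu.

(* Shannon entropy H_nu(beta) = - sum_{C in beta} nu(C) log nu(C) of a finite
   family of sets beta : I -> set T (I finite); ln 0 = 0 so 0 log 0 = 0. *)
Definition entropy (T : Type) (R : realType) (nu : set T -> \bar R)
  (I : finType) (beta : I -> set T) : R :=
  - \sum_(i : I) (fine (nu (beta i)) * ln (fine (nu (beta i)))).

(* The join \bigvee_{i=1}^n g_i^{-1} alpha of the pulled-back partitions,
   for alpha : J -> set T finite and a sequence A = (g_i)_{i >= 1} of G acting
   on T via act (so that g^{-1} C = act g @^-1` C = {x | g x \in C}).
   Its atoms are indexed by the choice functions c : 'I_n -> J. *)
Definition join_pullback (G T : Type) (act : G -> T -> T) (J : finType)
  (alpha : J -> set T) (A : nat -> G) (n : nat) : {ffun 'I_n -> J} -> set T :=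
  fun c => \bigcap_(i in [set: 'I_n]) (act (A (val i).+1) @^-1` alpha (c i)).
Arguments join_pullback {G T} act {J} alpha A n.

Definition seq_entropy (G T : Type) (R : realType) (nu : set T -> \bar R)
  (act : G -> T -> T) (J : finType) (alpha : J -> set T) (A : nat -> G)
  : \bar R :=
  limn_esup (fun n => ((n%:R)^-1 * entropy nu (join_pullback act alpha A n))%:E).

Definition max_seq_entropy (G T : Type) (R : realType) (nu : set T -> \bar R)
  (act : G -> T -> T) (J : finType) (alpha : J -> set T) : \bar R :=
  ereal_sup [set seq_entropy nu act alpha A | A in [set: nat -> G]].

Definition part2 (T : Type) (B : set T) : bool -> set T :=
  fun b => if b then B else ~` B.

Definition L2_precompact d (T : measurableType d) (R : realType)
  (nu : {measure set T -> \bar R}) (G : Type) (F : G -> T -> R) : Prop :=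
  forall u : nat -> G, exists phi : nat -> nat,
    (forall n, (phi n < phi n.+1)%N) /\
    exists f : T -> R,
      [/\ measurable_fun [set: T] f,
          ('N[nu]_(2%:E)[EFin \o f] < +oo)%E &
          ((fun n => ('N[nu]_(2%:E)[EFin \o (F (u (phi n)) \- f)%R])%E) @ \oo
             --> (0 : \bar R))].

(* Main.v *)
Require Import Defs.
From HB Require Import structures.
From mathcomp Require Import all_boot all_order all_algebra.
From mathcomp Require Import monoid.
From mathcomp Require Import all_classical all_reals all_analysis.
From mathcomp Require Import measurable_realfun hoelder.
From mathcomp Require Import ring lra.

Import Order.TTheory GRing.Theory Num.Theory.
Import numFieldNormedType.Exports.
Local Open Scope classical_set_scope.
Local Open Scope ring_scope.
Lemma ln_le_sub1 {R : realType} (x : R) : 0 < x -> ln x <= x - 1.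
Proof. move=> x0; have := @le_ln1Dx R (x - 1); rewrite addrCA subrr addr0; apply; lra. Qed.

Lemma gibbs {R : realType} (I : finType) (p q : I -> R) :
  (forall i, 0 <= p i) -> \sum_i p i = 1 -> (forall i, 0 <= q i) ->
  \sum_i q i <= 1 -> (forall i, 0 < p i -> 0 < q i) ->
  - \sum_i p i * ln (p i) <= - \sum_i p i * ln (q i).
Proof.
move=> p0 p1 q0 q1 pq; rewrite lerN2.
suff H : \sum_i (p i * ln (q i) - p i * ln (p i)) <= \sum_i (q i - p i).
  by move: H; rewrite !sumrB p1; lra.
apply: ler_sum => i _.
have [pi0|pi0] := eqVneq (p i) 0; first by rewrite pi0 !mul0r subrr subr0.
have pp : 0 < p i by rewrite lt_def pi0 p0.
have qp := pq i pp.
rewrite -mulrBr -ln_div ?posrE //.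
have h := @ln_le_sub1 R (q i / p i) (divr_gt0 qp pp).
have -> : q i - p i = p i * (q i / p i - 1) by field.
by rewrite ler_pM2l.
Qed.
Definition pr {R : realType} {d} {T : measurableType d} (P : set T -> \bar R)
  {I : finType} (f : T -> I) (i : I) : R := fine (P (f @^-1` [set i])).
Definition Hl {R : realType} {d} {T : measurableType d} (P : set T -> \bar R)
  {I : finType} (f : T -> I) : R := - \sum_(i : I) pr P f i * ln (pr P f i).
Definition mlab {d} {T : measurableType d} {I : finType} (f : T -> I) :=
  forall i, measurable (f @^-1` [set i]).

Lemma in_bigsetU (T : Type) (I : eqType) (s : seq I) (Q : pred I) (F : I -> set T) x :
  (\big[setU/set0]_(i <- s | Q i) F i) x <-> exists i, [/\ i \in s, Q i & F i x].
Proof.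
elim: s => [|a s IH]; first by rewrite big_nil; split => [|[i []]].

rewrite big_cons; split.
  case: ifP => Qa.
    by move=> /= [Fa|/IH[i [si Qi Fi]]]; [exists a; rewrite mem_head|exists i; rewrite inE si orbT].
  by move=> /IH[i [si Qi Fi]]; exists i; rewrite inE si orbT.
move=> [i []]; rewrite inE => /orP[/eqP->|si] Qi Fi.
  by rewrite Qi; left.
by case: ifP => _; [right|]; apply/IH; exists i.
Qed.

Lemma bigsetU_measure {R : realType} {d} {T : measurableType d}
  (P : {measure set T -> \bar R}) (I : eqType) (s : seq I) (Q : pred I) (F : I -> set T) :
  uniq s -> (forall i, measurable (F i)) ->
  (forall i j, i != j -> F i `&` F j = set0) ->
  P (\big[setU/set0]_(i <- s | Q i) F i) = (\sum_(i <- s | Q i) P (F i))%E.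
Proof.
move=> + mF dF; elim: s => [|a s IH] /=; first by rewrite !big_nil measure0.
move=> /andP[nas us]; rewrite !big_cons; case: (Q a); last exact: IH.
rewrite measureU //; first by congr (_ + _); exact: IH.
  by apply: bigsetU_measurable => i _; exact: mF.
apply/seteqP; split => x //= [Fa /in_bigsetU[i [si Qi Fi]]].
have ai : a != i by apply: contraNneq nas => ->.
have h := dF _ _ ai; have : (F a `&` F i) x by split.
by rewrite h.
Qed.

Lemma marg {R : realType} {d} {T : measurableType d}
  (P : {measure set T -> \bar R}) (I J : finType) (f : T -> I) (g : I -> J) (j : J) :
  mlab f -> P ((g \o f) @^-1` [set j]) = (\sum_(i | g i == j) P (f @^-1` [set i]))%E.
Proof.
move=> mf.
have -> : (g \o f) @^-1` [set j] = \big[setU/set0]_(i <- index_enum I | g i == j) (f @^-1` [set i]).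
  apply/seteqP; split => x /=.
    by move=> <-; apply/in_bigsetU; exists (f x); rewrite mem_index_enum eqxx.
  by move=> /in_bigsetU[i [_ /eqP <- ->]].
apply: bigsetU_measure => //; first exact: index_enum_uniq.
move=> i i' ii'; apply/seteqP; split => x //= [-> e].
by move: ii'; rewrite e eqxx.
Qed.

Lemma fiber_comp {T : Type} (I J : finType) (f : T -> I) (g : I -> J) (j : J) :
  (g \o f) @^-1` [set j] = \big[setU/set0]_(i <- index_enum I | g i == j) (f @^-1` [set i]).
Proof.
apply/seteqP; split => x /=.
  by move=> <-; apply/in_bigsetU; exists (f x); rewrite mem_index_enum eqxx.
by move=> /in_bigsetU[i [_ /eqP <- ->]].
Qed.

Lemma mlab_comp {d} {T : measurableType d} (I J : finType) (f : T -> I) (g : I -> J) :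
  mlab f -> mlab (g \o f).
Proof.
by move=> mf j; rewrite fiber_comp; apply: bigsetU_measurable => i _; exact: mf.
Qed.

Lemma P_le1 {R : realType} {d} {T : measurableType d}
  (P : {measure set T -> \bar R}) (S : set T) :
  P setT = 1%E -> measurable S -> (P S <= 1)%E.
Proof.
by move=> P1 mS; rewrite -P1; apply: le_measure => //; rewrite inE.
Qed.

Lemma P_fin {R : realType} {d} {T : measurableType d}
  (P : {measure set T -> \bar R}) (S : set T) :
  P setT = 1%E -> measurable S -> P S \is a fin_num.
Proof.
move=> P1 mS; rewrite ge0_fin_numE ?measure_ge0 //.
by apply: (le_lt_trans (P_le1 _ _ P1 mS)); rewrite ltry.
Qed.

Lemma prE {R : realType} {d} {T : measurableType d}
  (P : {measure set T -> \bar R}) (I : finType) (f : T -> I) i :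
  P setT = 1%E -> mlab f -> (pr P f i)%:E = P (f @^-1` [set i]).
Proof. by move=> P1 mf; rewrite /pr fineK //; exact: P_fin. Qed.

Lemma pr_ge0 {R : realType} {d} {T : measurableType d}
  (P : {measure set T -> \bar R}) (I : finType) (f : T -> I) i :
  0 <= pr P f i.
Proof. by rewrite /pr fine_ge0 ?measure_ge0. Qed.

Lemma pr_le {R : realType} {d} {T : measurableType d}
  (P : {measure set T -> \bar R}) (I J : finType) (f : T -> I) (g : T -> J) i j :
  P setT = 1%E -> mlab f -> mlab g ->
  f @^-1` [set i] `<=` g @^-1` [set j] -> pr P f i <= pr P g j.
Proof.
move=> P1 mf mg sub; rewrite -lee_fin !prE //.
by apply: le_measure => //; rewrite inE.
Qed.

Lemma pr_marg {R : realType} {d} {T : measurableType d}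
  (P : {measure set T -> \bar R}) (I J : finType) (f : T -> I) (g : I -> J) j :
  P setT = 1%E -> mlab f ->
  pr P (g \o f) j = \sum_(i | g i == j) pr P f i.
Proof.
move=> P1 mf; apply: EFin_inj; rewrite prE //; last exact: mlab_comp.
rewrite marg // -sumEFin; apply: eq_bigr => i _; by rewrite prE.
Qed.

Lemma pr_sum1 {R : realType} {d} {T : measurableType d}
  (P : {measure set T -> \bar R}) (I : finType) (f : T -> I) :
  P setT = 1%E -> mlab f -> \sum_i pr P f i = 1.
Proof.
move=> P1 mf.
have := @pr_marg _ _ _ P _ _ f (fun _ => tt) tt P1 mf.
have -> : pr P ((fun _ : I => tt) \o f) tt = 1.
  by rewrite /pr (_ : _ @^-1` _ = setT) ?P1 //; apply/seteqP; split => x.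
by move=> ->; apply: eq_bigl => i; rewrite eqxx.
Qed.

Lemma Hl_comp {R : realType} {d} {T : measurableType d}
  (P : {measure set T -> \bar R}) (I J : finType) (f : T -> I) (g : I -> J) :
  P setT = 1%E -> mlab f -> Hl P (g \o f) <= Hl P f.
Proof.
move=> P1 mf; rewrite /Hl lerN2.
have -> : \sum_j pr P (g \o f) j * ln (pr P (g \o f) j) =
          \sum_i pr P f i * ln (pr P (g \o f) (g i)).
  rewrite (partition_big g xpredT) //=; apply: eq_bigr => j _.
  rewrite pr_marg // mulr_suml; apply: eq_bigr => i /eqP <-.
  by rewrite -pr_marg.
apply: ler_sum => i _.
have [pi0|pi0] := eqVneq (pr P f i) 0; first by rewrite pi0 !mul0r.
have pp : 0 < pr P f i by rewrite lt_def pi0 pr_ge0.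
have le : pr P f i <= pr P (g \o f) (g i).
  apply: pr_le => //; first exact: mlab_comp.
  by move=> x /= ->.
rewrite ler_pM2l // ler_ln ?posrE //.
exact: lt_le_trans le.
Qed.

Lemma ln_prod {R : realType} (I : Type) (s : seq I) (F : I -> R) :
  (forall i, 0 < F i) -> ln (\prod_(i <- s) F i) = \sum_(i <- s) ln (F i).
Proof.
move=> H; elim: s => [|a s IH]; first by rewrite !big_nil ln1.
rewrite !big_cons lnM ?posrE ?IH //.
by apply: prodr_gt0 => i _.
Qed.

Lemma Hl_sub {R : realType} {d} {T : measurableType d}
  (P : {measure set T -> \bar R}) (J K : finType) (f : T -> {ffun J -> K}) :
  P setT = 1%E -> mlab f ->
  Hl P f <= \sum_j Hl P ((fun c : {ffun J -> K} => c j) \o f).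
Proof.
move=> P1 mf.
pose pj j := pr P ((fun c : {ffun J -> K} => c j) \o f).
pose q (c : {ffun J -> K}) := \prod_j pj j (c j).
have pjle c j : pr P f c <= pj j (c j).
  by apply: pr_le => //; [exact: mlab_comp | move=> x /= ->].
apply: (@le_trans _ _ (- \sum_c pr P f c * ln (q c))).
  apply: gibbs.
  - by move=> c; exact: pr_ge0.
  - exact: pr_sum1.
  - by move=> c; apply: prodr_ge0 => j _; exact: pr_ge0.
  - rewrite /q -bigA_distr_bigA /= big1 // => j _.
    by apply: pr_sum1 => //; exact: mlab_comp.
  - move=> c pc; apply: prodr_gt0 => j _.
    exact: lt_le_trans pc (pjle c j).
have -> : \sum_c pr P f c * ln (q c) =
          \sum_c \sum_j pr P f c * ln (pj j (c j)).
  apply: eq_bigr => c _; rewrite -mulr_sumr.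
  have [pc0|pc0] := eqVneq (pr P f c) 0; first by rewrite pc0 !mul0r.
  have pc : 0 < pr P f c by rewrite lt_def pc0 pr_ge0.
  rewrite /q ln_prod // => j.
  exact: lt_le_trans pc (pjle c j).
rewrite exchange_big /= /Hl -sumrN; apply: ler_sum => j _.
rewrite lerN2 (partition_big (fun c : {ffun J -> K} => c j) xpredT) //=.
rewrite le_eqVlt; apply/orP; left; apply/eqP/eq_bigr => k _.
rewrite /pj pr_marg // mulr_suml; apply: eq_bigr => c /eqP <-.
by rewrite -pr_marg.
Qed.

Lemma xlnx_small {R : realType} (x : R) : 0 <= x -> - (x * ln x) <= 2 * Num.sqrt x.
Proof.
move=> x0; have [->|xn0] := eqVneq x 0; first by rewrite mul0r oppr0 sqrtr0 mulr0.
have xp : 0 < x by rewrite lt_def xn0.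
set s := Num.sqrt x.
have sp : 0 < s by rewrite sqrtr_gt0.
have xs : x = s ^+ 2 by rewrite sqr_sqrtr.
have h := @ln_le_sub1 R (s^-1) (ltac:(by rewrite invr_gt0)).
rewrite lnV ?posrE // in h.
rewrite xs lnXn // mulr2n.
have e : - (s ^+ 2 * (ln s + ln s)) = 2 * s ^+ 2 * (- ln s) by ring.
rewrite e.
apply: (@le_trans _ _ (2 * s ^+ 2 * (s^-1 - 1))).
  by rewrite ler_pM2l // mulr_gt0 // exprn_gt0.
have -> : 2 * s ^+ 2 * (s^-1 - 1) = 2 * s - 2 * s ^+ 2 by field; rewrite gt_eqF.
have : 0 <= s ^+ 2 by rewrite sqr_ge0.
lra.
Qed.

Lemma binent {R : realType} (x : R) : 0 <= x <= 1 ->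
  - (x * ln x + (1 - x) * ln (1 - x)) <= 3 * Num.sqrt x.
Proof.
move=> /andP[x0 x1].
have h1 := xlnx_small _ x0.
have h2 : - ((1 - x) * ln (1 - x)) <= x.
  have [e|ne] := eqVneq (1 - x) 0; first by rewrite e mul0r oppr0.
  have tp : 0 < 1 - x by rewrite lt_def ne subr_ge0.
  have h := @ln_le_sub1 R ((1 - x)^-1) (ltac:(by rewrite invr_gt0)).
  rewrite lnV ?posrE // in h.
  have : - ((1 - x) * ln (1 - x)) <= (1 - x) * ((1 - x)^-1 - 1).
    by rewrite -mulrN ler_pM2l.
  have -> : (1 - x) * ((1 - x)^-1 - 1) = x by field.
  done.
have h3 : x <= Num.sqrt x.
  have s1 : Num.sqrt x <= 1 by rewrite -sqrtr1 ler_sqrt.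
  have s0 : 0 <= Num.sqrt x by rewrite sqrtr_ge0.
  rewrite -{1}(sqr_sqrtr x0) expr2.
  by rewrite ler_piMr.
lra.
Qed.

Lemma Hl_bool_small {R : realType} {d} {T : measurableType d}
  (P : {measure set T -> \bar R}) (e : T -> bool) :
  P setT = 1%E -> mlab e -> Hl P e <= 3 * Num.sqrt (pr P e true).
Proof.
move=> P1 me.
have s1 := pr_sum1 _ _ _ P1 me; rewrite big_bool /= in s1.
rewrite /Hl big_bool /=.
have -> : pr P e false = 1 - pr P e true by rewrite -s1; ring.
apply: binent; rewrite pr_ge0 /=.
have := pr_ge0 P _ e false; lra.
Qed.

Lemma Hl_bool_ln2 {R : realType} {d} {T : measurableType d}
  (P : {measure set T -> \bar R}) (e : T -> bool) :
  P setT = 1%E -> mlab e -> Hl P e <= ln 2.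
Proof.
move=> P1 me.
apply: (@le_trans _ _ (- \sum_b pr P e b * ln (2^-1))).
  apply: gibbs.
  - by move=> b; exact: pr_ge0.
  - exact: pr_sum1.
  - by move=> b; rewrite invr_ge0.
  - by rewrite big_bool /= -div1r -splitr.
  - by move=> b _; rewrite invr_gt0.
by rewrite -mulr_suml pr_sum1 // mul1r lnV ?posrE // opprK.
Qed.
Lemma act_borel_meas {R : realType} (X : pseudoPMetricType R) (f : X -> X)
  (fc : continuous f) (A : set (borel X)) :
  measurable A -> measurable (f @^-1` A : set (borel X)).
Proof.
move=> mA.
have mf : measurable_fun (setT : set (borel X)) (f : borel X -> borel X).
  apply: (@measurability _ _ (borel X) (borel X) setT f (@open X)); first by [].
  move=> _ [U oU <-]; rewrite setTI; apply: sub_sigma_algebra.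
  by apply: open_comp => // x _; exact: fc.
by have := mf measurableT A mA; rewrite setTI.
Qed.

Lemma cmeas_pre {R : realType} (X : pseudoPMetricType R) (f : X -> X)
  (fc : continuous f) (mu : probability (borel X) R)
  (inv : forall A : set (borel X), measurable A -> mu (f @^-1` A) = mu A)
  (B : set X) (mB : completion_sets mu B) :
  measurable (f @^-1` B : set (completed_space mu)).
Proof.
case: mB => A mA [N [M [mM M0 NM]] <-].
rewrite preimage_setU; apply: measurableU.
  apply: caratheodory_measurable_mu_ext.
  exact: act_borel_meas.
apply: measure_is_complete_caratheodory.
exists (f @^-1` M); split.
- apply: caratheodory_measurable_mu_ext; exact: act_borel_meas.
- transitivity (mu (f @^-1` M)); last by rewrite inv.
  by apply: measurable_mu_extE; exact: act_borel_meas.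
- by move=> x /= /NM.
Qed.
Fixpoint wseq {G : Type} (x0 : G) (pick : nat * (nat -> G) -> G) (n : nat) : seq G :=
  if n is n'.+1 then rcons (wseq x0 pick n') (pick (n', nth x0 (wseq x0 pick n'))) else [::].

Lemma net_lemma {R : realType} {d} {T : measurableType d}
  (nu : {measure set T -> \bar R}) (G : Type) (x0 : G) (F : G -> T -> R)
  (mF : forall g, measurable_fun setT (F g))
  (H : L2_precompact nu F) (e : R) (e0 : 0 < e) :
  exists K (s : 'I_K -> G), forall g, exists k : 'I_K,
    ('N[nu]_2%:E[EFin \o (F g \- F (s k))%R] < e%:E)%E.
Proof.
pose dist g h := ('N[nu]_2%:E[EFin \o (F g \- F h)%R])%E.
apply: contrapT => Hn.
have Hl (n : nat) (s : nat -> G) :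
    exists g, forall k, (k < n)%N -> ~ (dist g (s k) < e%:E)%E.
  apply: contrapT => nex; apply: Hn.
  exists n, (fun k : 'I_n => s k) => g.
  apply: contrapT => nk; apply: nex; exists g => k kn dk; apply: nk.
  by exists (Ordinal kn).
have [pick Hpick] := choice (fun ns : nat * (nat -> G) => Hl ns.1 ns.2).
pose w := wseq x0 pick.
pose u n := pick (n, nth x0 (w n)).
have sw n : size (w n) = n by elim: n => //= n IH; rewrite size_rcons IH.
have uw m n : (m < n)%N -> nth x0 (w n) m = u m.
  elim: n => // n IH; rewrite ltnS leq_eqVlt => /orP[/eqP ->|mn] /=.
    by rewrite nth_rcons sw ltnn eqxx.
  by rewrite nth_rcons sw mn IH.
have sep m n : (m < n)%N -> ~ (dist (u n) (u m) < e%:E)%E.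
  by move=> mn; rewrite -(uw m n mn); exact: (Hpick (n, _)).
have [phi [phiS [f [mf _ cvf]]]] := H u.
have e20 : 0 < e / 2 by rewrite divr_gt0.
have [fin cvf'] := (fine_cvgP _ _).1 cvf.
have h1 := cvgr_lt 0 cvf' (e / 2) e20.
case: fin => N1 _ H1; case: h1 => N2 _ H2.
pose N := maxn N1 N2.
have HN n : (N <= n)%N ->
    ('N[nu]_2%:E[EFin \o (F (u (phi n)) \- f)%R] < (e / 2)%:E)%E.
  move=> Nn; have h1n : (N1 <= n)%N by apply: leq_trans Nn; rewrite leq_maxl.
  have h2n : (N2 <= n)%N by apply: leq_trans Nn; rewrite leq_maxr.
  by rewrite -(fineK (H1 n h1n)) lte_fin; exact: H2.
have mFf g : measurable_fun setT (F g \- f)%R by exact: measurable_funB.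
apply: (sep _ _ (phiS N)); rewrite /dist.
have -> : (F (u (phi N.+1)) \- F (u (phi N)))%R =
  ((F (u (phi N.+1)) \- f) \+ (\- (F (u (phi N)) \- f)))%R.
  by apply/funext => x /=; ring.
apply: (le_lt_trans (minkowski_EFin _ _ _ _)).
- exact: mFf.
- exact/measurable_funN/mFf.
- by rewrite ler1n.
have -> : (EFin \o (\- (F (u (phi N)) \- f))%R) = (\- (EFin \o (F (u (phi N)) \- f)%R))%E.
  by apply/funext => x /=; rewrite EFinN.
rewrite oppe_Lnorm.
apply: (@lt_le_trans _ _ ((e / 2)%:E + (e / 2)%:E)%E).
  by apply: lteD; apply: HN.
by rewrite -EFinD -splitr.
Qed.
Lemma dist_meas {R : realType} {d} {T : measurableType d}
  (nu : {measure set T -> \bar R}) (S1 S2 : set T)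
  (m1 : measurable S1) (m2 : measurable S2) (e : R) (e0 : 0 <= e) :
  ('N[nu]_2%:E[EFin \o (\1_S1 \- \1_S2)%R] < e%:E)%E ->
  (nu ((S1 `\` S2) `|` (S2 `\` S1)) <= (e ^+ 2)%:E)%E.
Proof.
set D := (S1 `\` S2) `|` (S2 `\` S1).
have mD : measurable D by apply: measurableU; apply: measurableD.
set N := ('N[nu]_2%:E[_])%E => Ne.
have key : (N `^ 2 = nu D)%E.
  rewrite /N poweR_Lnorm ?pnatr_eq0 //.
  transitivity (\int[nu]_x (\1_D x)%:E)%E; last by rewrite integral_indic // setIT.
  apply: eq_integral => x _ /=.
  congr (_%:E); rewrite !indicE /D in_setU !in_setD.
  case: (boolP (x \in S1)) => h1; case: (boolP (x \in S2)) => h2 /=;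
  by rewrite ?subrr ?subr0 ?sub0r ?normrN ?normr0 ?normr1 ?powR1 ?powR0.
have N0 : (0 <= N)%E by exact: Lnorm_ge0.
rewrite -key.
have Nfin : N \is a fin_num by rewrite ge0_fin_numE // (lt_trans Ne) ?ltry.
have h := Ne; rewrite -(fineK Nfin) lte_fin in h.
rewrite -(fineK Nfin) poweR_EFin lee_fin powR_mulrn ?fine_ge0 //.
have := fine_ge0 N0; nra.
Qed.
Lemma mlab_bool {d} {T : measurableType d} (e : T -> bool) :
  measurable [set x | e x] -> mlab e.
Proof.
move=> me [].
  by rewrite (_ : _ @^-1` _ = [set x | e x]) //; apply/seteqP; split => x /=.
rewrite (_ : _ @^-1` _ = ~` [set x | e x]); first exact: measurableC.
by apply/seteqP; split => x /=; case: (e x).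
Qed.

Lemma mlab_ffun {d} {T : measurableType d} (J : finType) (f : T -> {ffun J -> bool}) :
  (forall j, measurable [set x | f x j]) -> mlab f.
Proof.
move=> mf c.
rewrite (_ : _ @^-1` _ = \bigcap_(j in [set: J]) ((fun x => f x j) @^-1` [set c j])).
  apply: fin_bigcap_measurable; first exact: finite_finset.
  by move=> j _; exact: (@mlab_bool _ _ (fun x => f x j) (mf j) (c j)).
apply/seteqP; split => x /=.
  by move=> <- j _.
by move=> h; apply/ffunP => j; exact: h.
Qed.

Lemma asbool_set (T : Type) (S : set T) : [set x | `[< S x >]] = S.
Proof. by apply/seteqP; split => x /=; [move/asboolP|move=> h; apply/asboolP]. Qed.

Lemma xor_set (T : Type) (S1 S2 : set T) :
  [set x | `[< S1 x >] (+) `[< S2 x >]] = (S1 `\` S2) `|` (S2 `\` S1).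
Proof.
apply/seteqP; split => x /=;
case: (asboolP (S1 x)) => h1; case: (asboolP (S2 x)) => h2 //=; try tauto.
Qed.

Lemma final_eps {R : realType} (S : \bar R) : (0 <= S)%E ->
  (forall e : R, 0 < e -> (S <= (4 * e)%:E)%E) -> S = 0%E.
Proof.
move=> S0 H.
have S4 := H 1 ltr01.
have Sfin : S \is a fin_num by rewrite ge0_fin_numE // (le_lt_trans S4) ?ltry.
move: S0 H; rewrite -(fineK Sfin); move: (fine S) => r r0 H.
rewrite lee_fin in r0; clear S4 Sfin.
have [rp|r_le0] := ltP 0 r.
  have r8 : 0 < r / 8 by rewrite divr_gt0.
  have h := H (r / 8) r8; rewrite lee_fin in h; clear H; exfalso; lra.
by congr (_%:E); clear H; lra.
Qed.

Theorem lemmaB2 (R : realType)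
  (G : groupType) (G_countable : countable [set: G])
  (G_infinite : infinite_set [set: G])
  (X : pseudoPMetricType R) (X_hausdorff : hausdorff_space X)
  (X_compact : compact [set: X])
  (act : G -> X -> X)
  (act1 : forall x, act 1%g x = x)
  (actM : forall g h x, act (g * h)%g x = act g (act h x))
  (act_cont : forall g, continuous (act g))
  (mu : probability (borel X) R)
  (mu_inv : forall (g : G) (A : set (borel X)),
      measurable A -> mu (act g @^-1` A) = mu A)
  (B : set X) (mB : completion_sets mu B) :
  L2_precompact (@completed_measure_extension _ _ _ mu)
    (fun g : G => fun x : completed_space mu => \1_B (act g x) : R) ->
  max_seq_entropy (@completed_measure_extension _ _ _ mu) act (part2 B) = 0%E.
Proof.
move=> Hpre.
set nu := @completed_measure_extension _ _ _ mu.
have nu1 : nu setT = 1%E.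
  transitivity (mu setT); last exact: probability_setT.
  exact: measurable_mu_extE.
have mBg g : measurable (act g @^-1` B : set (completed_space mu)).
  exact: (@cmeas_pre R X (act g) (act_cont g) mu (mu_inv g) B mB).
set F := fun g : G => fun x : completed_space mu => \1_B (act g x) : R.
have FE g : F g = \1_(act g @^-1` B).
  by apply/funext => x; rewrite /F !indicE.
have mF g : measurable_fun setT (F g) by rewrite FE; exact: measurable_indic.
have net := @net_lemma R _ _ nu G 1%g F mF Hpre.
have key (A : nat -> G) : seq_entropy nu act (part2 B) A = 0%E.
  pose L n (x : completed_space mu) : {ffun 'I_n -> bool} :=
    [ffun i : 'I_n => `[< B (act (A i.+1) x) >]].
  have mL n : mlab (L n).
    apply: mlab_ffun => i.
    rewrite (_ : [set x | _] = act (A i.+1) @^-1` B); first exact: mBg.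
    by apply/seteqP; split => x /=; rewrite ffunE; [move/asboolP|move=> h; apply/asboolP].
  have entE n : entropy nu (join_pullback act (part2 B) A n) = Hl nu (L n).
    rewrite /entropy /Hl /pr; congr (- _); apply: eq_bigr => c _.
    suff -> : join_pullback act (part2 B) A n c = L n @^-1` [set c] by [].
    apply/seteqP; split => x /=.
      move=> h; apply/ffunP => i; rewrite ffunE; have := h i I; rewrite /part2 /=.
      by case: (c i) => /= hb; [apply/asboolP|apply/negbTE/asboolPn].
    move=> <- i _; rewrite /part2 ffunE; by case: asboolP.
  have Hge n : 0 <= Hl nu (L n).
    rewrite /Hl oppr_ge0; apply: sumr_le0 => c _.
    have p0 := pr_ge0 nu _ (L n) c.
    have p1 : pr nu (L n) c <= 1.
      by rewrite -lee_fin prE //; apply: P_le1 => //; exact: mL.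
    by rewrite mulr_ge0_le0 // ln_le0.
  pose u n := ((n%:R)^-1 * Hl nu (L n))%:E.
  have seqE : seq_entropy nu act (part2 B) A = limn_esup u.
    by rewrite /seq_entropy; congr limn_esup; apply/funext => n; rewrite entE.
  rewrite seqE; apply: final_eps.
    rewrite limn_esup_lim; apply: lime_ge; first exact: is_cvg_esups.
    apply: nearW => n; apply: (le_trans _ (ereal_sup_ubound _)); last by exists n => /=.
    by rewrite /u lee_fin mulr_ge0 // invr_ge0.
  move=> e e0.
  have [K [s hs]] := net e e0.
  have [kap hkap] := choice hs.
  have bound n : Hl nu (L n) <= K%:R * ln 2 + n%:R * (3 * e).
    pose Y (x : completed_space mu) : {ffun 'I_K + 'I_n -> bool} :=
      [ffun j : ('I_K + 'I_n)%type => match j with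
                 | inl k => `[< B (act (s k) x) >]
                 | inr i => `[< B (act (A i.+1) x) >] (+) `[< B (act (s (kap (A i.+1))) x) >]
                 end].
    pose gg (y : {ffun 'I_K + 'I_n -> bool}) : {ffun 'I_n -> bool} :=
      [ffun i : 'I_n => y (inr i) (+) y (inl (kap (A i.+1)))].
    have LE : L n = gg \o Y.
      by apply/funext => x; apply/ffunP => i; rewrite /gg /Y /L !ffunE /= addbK.
    have mY : mlab Y.
      apply: mlab_ffun => -[k|i].
        rewrite (_ : [set x | _] = act (s k) @^-1` B); first exact: mBg.
        by apply/seteqP; split => x /=; rewrite ffunE; [move/asboolP|move=> h; apply/asboolP].
      rewrite (_ : [set x | _] = [set x | `[< (act (A i.+1) @^-1` B) x >] (+)
                                           `[< (act (s (kap (A i.+1))) @^-1` B) x >]]).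
        by rewrite xor_set; apply: measurableU; apply: measurableD.
      by apply/seteqP; split => x /=; rewrite ffunE.
    rewrite LE; apply: (le_trans (Hl_comp _ _ _ _ _ nu1 mY)).
    apply: (le_trans (Hl_sub _ _ _ _ nu1 mY)); rewrite big_sumType /=.
    have sC m (c : R) : \sum_(i < m) c = m%:R * c.
      by rewrite sumr_const card_ord mulr_natl.
    rewrite -(sC K (ln 2)) -(sC n (3 * e)).
    apply: lerD.
      apply: ler_sum => k _; apply: Hl_bool_ln2 => //; exact: mlab_comp.
    apply: ler_sum => i _.
    have mc : mlab ((fun c : {ffun 'I_K + 'I_n -> bool} => c (inr i)) \o Y) by exact: mlab_comp.
    apply: (le_trans (Hl_bool_small _ _ nu1 mc)).
    rewrite ler_pM2l //.
    set S1 := act (A i.+1) @^-1` B.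
    set S2 := act (s (kap (A i.+1))) @^-1` B.
    have fib : ((fun c : {ffun 'I_K + 'I_n -> bool} => c (inr i)) \o Y) @^-1` [set true]
               = (S1 `\` S2) `|` (S2 `\` S1).
      rewrite -xor_set; apply/seteqP; split => x /=; rewrite ffunE //.
    have hd := hkap (A i.+1); rewrite !FE in hd.
    have := @dist_meas _ _ _ nu _ _ (mBg _) (mBg _) e (ltW e0) hd.
    rewrite -fib -prE // lee_fin => hp.
    rewrite -(ger0_norm (ltW e0)) -sqrtr_sqr.
    by rewrite ler_sqrt; [exact: hp|rewrite sqr_ge0].
  pose c := K%:R * ln (2 : R).
  have c0 : 0 <= c by rewrite mulr_ge0 // ln_ge0 // ler1n.
  pose N := (Num.Def.trunc (c / e)).+1.
  have hN : c / e < N%:R by exact: truncnS_gt.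
  apply: (@le_trans _ _ (ereal_sup (u @` [set k | (N <= k)%N]))).
    by apply: ereal_inf_lbound; exists [set k | (N <= k)%N] => //; exists N.
  apply: ub_ereal_sup => _ [k Nk <-].
  rewrite /u lee_fin.
  have kp : 0 < k%:R :> R by rewrite ltr0n (leq_trans _ Nk).
  have hk : c < k%:R * e.
    rewrite -ltr_pdivrMr //; apply: (lt_le_trans hN); by rewrite ler_nat.
  have h1 : k%:R^-1 * c <= e.
    by rewrite ler_pdivrMl // ltW.
  apply: (le_trans (ler_wpM2l _ (bound k))); first by rewrite invr_ge0 ltW.
  rewrite mulrDr mulrA.
  have -> : k%:R^-1 * (k%:R * 3 * e) = 3 * e by field; rewrite gt_eqF.
  rewrite -/c; lra.
rewrite /max_seq_entropy.
have -> : [set seq_entropy nu act (part2 B) A | A in [set: nat -> G]] = [set 0%E].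
  apply/seteqP; split => y /=.
    by move=> [A _ <-]; rewrite key.
  by move=> ->; exists (fun _ => 1%g) => //; rewrite key.
exact: ereal_sup1.
Qed.
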